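(* Let $n\ge4$ be even, $p\ge n+1$ an integer, $c_1$ a positive integer, $a_k=pc_k$, $c_{k+1}=p^2c_k$, $\Theta_k=\Theta_{a_k,c_k}$, and $b_{k,i}=|\Theta_1\cdots\Theta_ke_i|$. Then for every $k\ge1$, $$\prod_{j=1}^{k-1}c_j<b_{k,1}<\prod_{j=1}^k 2a_j,\qquad \prod_{j=1}^{k}c_j<b_{k,n}<\prod_{j=1}^k 2a_j.$$
   Context: For positive integers $a,c$, $\Theta_{a,c}$ is the $n\times n$ matrix with row $1=(1,c,\dots,c)$, row $n=(1,c+1,\dots,c+1)$, and for $1\le i\le(n-2)/2$: row $2i$ has $0$ in column 1, $2$ in columns $2i$ and $2i+1$, and $1$ in the other columns among $2,\dots,n$; row $2i+1$ has $a$ in column $2i$, $a+1$ in column $2i+1$, $0$ elsewhere. For a vector $v$, $|v|$ is the sum of its entries; $e_i$ is the $i$-th standard basis vector. *)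

(* Defs.v *)
From mathcomp Require Import all_boot all_order all_algebra.
Set Implicit Arguments. Unset Strict Implicit. Unset Printing Implicit Defensive.
Import GRing.Theory.

(* Entry (r, s) of Theta_{a,c} in 1-based indexing (r, s in 1..n), as in the paper. *)
Definition theta_entry (n a c r s : nat) : nat :=
  if r == 1 then (if s == 1 then 1 else c)
  else if r == n then (if s == 1 then 1 else c.+1)
  else if ~~ odd r then
    (if s == 1 then 0 else if (s == r) || (s == r.+1) then 2 else 1)
  else
    (if s == r.-1 then a else if s == r then a.+1 else 0).

Definition Theta (n a c : nat) : 'M[nat]_n :=
  \matrix_(i < n, j < n) theta_entry n a c i.+1 j.+1.

(* |M e_j| : sum of the entries of column j of M. *)
Definition colsum {n : nat} (M : 'M[nat]_n) (j : 'I_n) : nat :=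
  \sum_(r < n) M r j.

Definition bcoef {n : nat} (a c : nat -> nat) (k : nat) (j : 'I_n) : nat :=
  colsum (\prod_(1 <= l < k.+1) Theta n (a l) (c l))%R j.

(* Main.v *)
Require Import Defs.
From mathcomp Require Import all_boot all_order all_algebra zify.
Set Implicit Arguments. Unset Strict Implicit.

Lemma th_col1 n a c r : 4 <= n -> r < n ->
  theta_entry n a c r.+1 1 = (r == 0) + (r == n.-1).
Proof.
move=> Hn Hr; rewrite /theta_entry.
repeat case: ifP; move=> *; lia.
Qed.

Lemma th_coln n a c r : 4 <= n -> ~~ odd n -> r < n ->
  theta_entry n a c r.+1 n <= 1 + (r == 0) * c + (r == n.-1) * c.
Proof.
move=> Hn Ho Hr; rewrite /theta_entry.
repeat case: ifP; move=> *; lia.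
Qed.

Lemma th_nn n a c : 4 <= n -> theta_entry n a c n n = c.+1.
Proof. move=> Hn; rewrite /theta_entry; repeat case: ifP; move=> *; lia. Qed.

Lemma th_gen n a c r j : 4 <= n -> ~~ odd n -> r < n -> j < n ->
  theta_entry n a c r.+1 j.+1 <=
    2 + (r == 0) * c + (r == n.-1) * c + (r == j + odd j) * a.+1.
Proof.
move=> Hn Ho Hr Hj; rewrite /theta_entry.
repeat case: ifP; move=> *; lia.
Qed.

Lemma colsum1 n (j : 'I_n) : colsum (1%R : 'M[nat]_n) j = 1.
Proof.
rewrite /colsum (bigD1 j) //= big1 => [|i Hi]; rewrite !mxE ?eqxx //.
by rewrite (negbTE Hi).
Qed.

Lemma colsumM n (A B : 'M[nat]_n) j :
  colsum (A * B)%R j = \sum_(t < n) colsum A t * B t j.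
Proof.
rewrite /colsum -mulmxE.
under eq_bigr do rewrite mxE.
rewrite exchange_big /=; apply: eq_bigr => t _.
by rewrite big_distrl.
Qed.

Lemma bcoef0 n a c (j : 'I_n) : bcoef a c 0 j = 1.
Proof. by rewrite /bcoef big_geq // colsum1. Qed.

Lemma bcoefS n a c k (j : 'I_n) : bcoef a c k.+1 j =
  \sum_(t < n) bcoef a c k t * theta_entry n (a k.+1) (c k.+1) t.+1 j.+1.
Proof.
rewrite /bcoef big_nat_recr //= colsumM; apply: eq_bigr => t _.
by rewrite mxE.
Qed.

Lemma sum_ind n t : \sum_(r < n) (nat_of_ord r == t : nat) = (t < n).
Proof.
elim: n => [|n IH]; first by rewrite big_ord0.
rewrite big_ord_recr /= IH; case: (ltngtP t n) => H; try lia.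
Qed.

Lemma sum_pick n (v : 'I_n -> nat) (e : 'I_n) k : nat_of_ord e = k ->
  \sum_(t < n) v t * (nat_of_ord t == k) = v e.
Proof.
move=> <-; rewrite (bigD1 e) //= eqxx muln1 big1 ?addn0 // => i Hi.
have : nat_of_ord i != nat_of_ord e by [].
by case: eqP => //; rewrite muln0.
Qed.

Lemma sum_indc n k x : \sum_(t < n) (nat_of_ord t == k) * x <= x.
Proof. rewrite -big_distrl /= sum_ind; case: (k < n); lia. Qed.

Lemma sum_bound n (v : 'I_n -> nat) (f : 'I_n -> nat) g B :
  (forall t, v t <= B) -> (forall t, f t <= g t) ->
  \sum_(t < n) v t * f t <= B * \sum_(t < n) g t.
Proof.
move=> Hv Hf; rewrite big_distrr /=; apply: leq_sum => t _.
by apply: leq_mul => //; lia.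
Qed.

Section Step.
Variables (n a c B : nat) (v : 'I_n -> nat) (e1 en : 'I_n).
Hypotheses (Hn : 4 <= n) (Ho : ~~ odd n) (He1 : nat_of_ord e1 = 0)
  (Hen : nat_of_ord en = n.-1) (HB : forall t, v t <= B).
Local Notation S j := (\sum_(t < n) v t * theta_entry n a c t.+1 (nat_of_ord j).+1).

Lemma S_e1 : S e1 = v e1 + v en.
Proof.
rewrite He1.
under eq_bigr => t _ do rewrite th_col1 ?ltn_ord // mulnDr.
by rewrite big_split /= (sum_pick _ He1) (sum_pick _ Hen).
Qed.

Lemma S_en_lo : v en * c.+1 <= S en.
Proof.
rewrite (bigD1 en) //= Hen (_ : n.-1.+1 = n); last by lia.
by rewrite th_nn // leq_addr.
Qed.

Lemma S_en_up : S en <= B * (n + c + c).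
Proof.
rewrite Hen (_ : n.-1.+1 = n); last by lia.
apply: leq_trans (sum_bound (g := fun t : 'I_n => 1 + (nat_of_ord t == 0) * c + (nat_of_ord t == n.-1) * c) HB _) _.
  by move=> t; apply: th_coln.
apply: leq_mul => //; rewrite !big_split /= sum1_card card_ord.
by apply: leq_add; [apply: leq_add => //|]; apply: sum_indc.
Qed.

Lemma S_gen_up (j : 'I_n) : S j <= B * (n + n + c + c + a.+1).
Proof.
apply: leq_trans (sum_bound (g := fun t : 'I_n => 2 + (nat_of_ord t == 0) * c + (nat_of_ord t == n.-1) * c + (nat_of_ord t == j + odd j) * a.+1) HB _) _.
  by move=> t; apply: th_gen.
apply: leq_mul => //; rewrite !big_split /= sum_nat_const card_ord.
rewrite (_ : n + n + c + c + a.+1 = (n * 2) + c + c + a.+1); last by lia.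
by apply: leq_add; [apply: leq_add; [apply: leq_add => //|]|]; apply: sum_indc.
Qed.
End Step.

Lemma ar1 M n p c : 4 <= n -> 0 < M -> n.+1 <= p -> p * p <= c ->
  2 * M * (n + c + c) < M * (2 * (p * c)).
Proof. move=> Hn HM Hp Hc. have Hpc : p <= c by nia. have : 5 * c <= p * c by apply: leq_mul => //; lia. rewrite (mulnC 2 M) -mulnA ltn_pmul2l //. nia. Qed.

Lemma ar2 M n p c : 4 <= n -> n.+1 <= p -> p * p <= c ->
  2 * M * (n + n + c + c + (p * c).+1) <= 2 * (M * (2 * (p * c))).
Proof. move=> Hn Hp Hc. rewrite -mulnA; apply: leq_mul => //. apply: leq_mul => //. have Hpc : p <= c by nia. have : 5 * c <= p * c by apply: leq_mul => //; lia. nia. Qed.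

Theorem mainTheorem11 (n p : nat) (a c : nat -> nat) (e1 en : 'I_n) :
  4 <= n -> ~~ odd n -> n.+1 <= p ->
  0 < c 1 ->
  (forall k, 1 <= k -> a k = p * c k) ->
  (forall k, 1 <= k -> c k.+1 = p ^ 2 * c k) ->
  nat_of_ord e1 = 0 -> nat_of_ord en = n.-1 ->
  forall k, 1 <= k ->
    [/\ \prod_(1 <= j < k) c j < bcoef a c k e1,
        bcoef a c k e1 < \prod_(1 <= j < k.+1) (2 * a j),
        \prod_(1 <= j < k.+1) c j < bcoef a c k en
      & bcoef a c k en < \prod_(1 <= j < k.+1) (2 * a j)].
Proof.
move=> Hn Ho Hp Hc1 Ha Hc He1 Hen.
have cpos : forall k, 1 <= k -> 0 < c k.
  elim=> [//|[|k] IH _] //; rewrite Hc // muln_gt0 IH // expn_gt0; lia.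
have cbig : forall k, 2 <= k -> p * p <= c k.
  case=> [//|[//|k]] _; rewrite Hc // expnS expn1.
  have := cpos k.+1 isT; nia.
set M := fun k => \prod_(1 <= j < k.+1) (2 * a j).
set C := fun k => \prod_(1 <= j < k.+1) c j.
have MS : forall k, M k.+1 = M k * (2 * a k.+1).
  by move=> k; rewrite /M big_nat_recr.
have CS : forall k, C k.+1 = C k * c k.+1.
  by move=> k; rewrite /C big_nat_recr.
have Mpos : forall k, 0 < M k.
  elim=> [|k IH]; first by rewrite /M big_geq.
  rewrite MS muln_gt0 IH Ha //; have := cpos k.+1 isT; nia.
have Cpos : forall k, 0 < C k.
  elim=> [|k IH]; first by rewrite /C big_geq.
  by rewrite CS muln_gt0 IH cpos.
suff H : forall k, 1 <= k ->
  [/\ forall t : 'I_n, bcoef a c k t <= 2 * M k,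
      C k.-1 < bcoef a c k e1, bcoef a c k e1 < M k,
      C k < bcoef a c k en & bcoef a c k en < M k].
  move=> k Hk; have [_ H1 H2 H3 H4] := H k Hk; split => //.
  by move: H1; case: k Hk {H2 H3 H4} => [//|k] _ /=; rewrite /C.
elim=> [//|k IH] _.
have Hc1' : 1 <= k.+1 by [].
pose v := @bcoef n a c k.
have bS : forall j : 'I_n, bcoef a c k.+1 j =
   \sum_(t < n) v t * theta_entry n (a k.+1) (c k.+1) t.+1 j.+1.
  by move=> j; rewrite bcoefS.
case: (posnP k) => [k0|kpos].
  subst k.
  have HB : forall t, v t <= 1 by move=> t; rewrite /v bcoef0.
  have M1 : M 1 = 2 * a 1 by rewrite MS /M big_geq // mul1n.
  have C1 : C 1 = c 1 by rewrite CS /C big_geq // mul1n.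
  have Ha1 := Ha 1 isT.
  have Hv1 : forall t, v t = 1 by move=> t; rewrite /v bcoef0.
  split.
  - move=> t; rewrite bS; apply: leq_trans (S_gen_up _ _ Hn Ho He1 Hen HB t) _ => //.
    rewrite M1 Ha1; nia.
  - rewrite bS (S_e1 _ _ _ Hn He1 Hen) !Hv1 /C big_geq //.
  - rewrite bS (S_e1 _ _ _ Hn He1 Hen) !Hv1 M1 Ha1; nia.
  - rewrite bS; apply: leq_trans (S_en_lo _ _ _ Hn Ho He1 Hen) => //; rewrite Hv1 C1; lia.
  - rewrite bS; apply: leq_ltn_trans (S_en_up _ _ Hn Ho He1 Hen HB) _.
    rewrite M1 Ha1; nia.
have [IH0 IH1 IH2 IH3 IH4] := IH kpos.
have HB : forall t, v t <= 2 * M k by [].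
have cb := cbig k.+1 kpos.
have Hak := Ha k.+1 isT.
split.
- move=> t; rewrite bS; apply: leq_trans (S_gen_up _ _ Hn Ho He1 Hen HB t) _ => //.
  by rewrite MS Hak; apply: ar2.
- rewrite bS (S_e1 _ _ _ Hn He1 Hen) /=; apply: leq_trans IH3 _; apply: leq_addl.
- rewrite bS (S_e1 _ _ _ Hn He1 Hen) MS Hak.
  have : 2 * M k * 2 < M k * (2 * (p * c k.+1)).
    rewrite [2 * M k]mulnC -mulnA ltn_pmul2l //; have : 5 * 1 <= p * c k.+1 by apply: leq_mul; [lia | exact: cpos]. lia.
  have := IH0 e1; have := IH0 en; rewrite /v; lia.
- rewrite bS; apply: leq_trans (S_en_lo _ _ _ Hn Ho He1 Hen) => //.
  rewrite CS; apply: (@leq_trans ((C k).+1 * c k.+1)); first by rewrite mulSn; have := cpos k.+1 isT; lia.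
  by apply: leq_mul => //.
- rewrite bS; apply: leq_ltn_trans (S_en_up _ _ Hn Ho He1 Hen HB) _.
  by rewrite MS Hak; apply: ar1.
Qed.
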